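(* Let $X=X(\Sigma)$ be an $n$-dimensional complete simplicial toric variety with homogeneous coordinate ring $S=\mathbb C[x_1,\dots,x_r]$, and let $z_0,\dots,z_n$ be monomials with $z_0\cdots z_n=x_1\cdots x_r$. Let $Z_i\subset X$ be the zero locus of $z_i$. Then $Z_1\cap\dots\cap Z_n$ is a finite set, consisting of the torus-fixed points $O_\sigma$ for the maximal cones $\sigma$ of $\Sigma$ that contain a ray $\rho_j$ with $x_j\mid z_i$ for each $i=1,\dots,n$.
   Context: $\Sigma$ is a complete simplicial fan in $N_\mathbb R$ with rays $\rho_1,\dots,\rho_r$; the variable $x_j$ corresponds to $\rho_j$ and its zero locus on $X$ is the torus-invariant prime divisor $D_j$. $O_\sigma$ denotes the torus orbit corresponding to a cone $\sigma$ (a fixed point when $\sigma$ is maximal). Since $z_0\cdots z_n=x_1\cdots x_r$, each variable divides exactly one $z_i$. *)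

(* Defs.v *)
(* Toric variety X(Sigma) presented as a Cox quotient
   (C^r \ Z(Sigma)) / G, with C modelled by algC. *)
From HB Require Import structures.
From mathcomp Require Import all_boot all_order all_algebra all_field.
Set Implicit Arguments. Unset Strict Implicit. Unset Printing Implicit Defensive.
Import Order.TTheory GRing.Theory Num.Theory.
Local Open Scope ring_scope.

Definition vC n r (v : 'I_r -> 'rV[int]_n) (j : 'I_r) : 'rV[algC]_n :=
  map_mx (fun z : int => z%:~R) (v j).

(* the cone spanned by the rays indexed by s (nonnegative real coefficients;
   in algC, 0 <= a forces a to be real) *)
Definition in_cone n r (v : 'I_r -> 'rV[int]_n) (s : {set 'I_r})
  (w : 'rV[algC]_n) : Prop :=
  exists a : 'I_r -> algC, (forall j, 0 <= a j) /\ w = \sum_(j in s) a j *: vC v j.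

(* Sigma: a complete simplicial fan in N_R with rays rho_1..rho_r
   (primitive generators v j); each cone is recorded by its set of rays. *)
Definition simplicial_complete_fan n r (v : 'I_r -> 'rV[int]_n)
  (cones : {set {set 'I_r}}) : Prop :=
  injective v /\
      (forall j, (\big[gcdn/0%N]_(k < n) absz (v j ord0 k))%N = 1%N) /\
      (forall j, [set j] \in cones) /\
      (forall s t : {set 'I_r}, s \in cones -> t \subset s -> t \in cones) /\
      (* simplicial: generators linearly independent *)
      (forall s : {set 'I_r}, s \in cones -> forall a : 'I_r -> algC,
          \sum_(j in s) a j *: vC v j = 0 -> forall j, j \in s -> a j = 0) /\
      (* fan: two cones meet along their common face *)
      (forall (s t : {set 'I_r}) w, s \in cones -> t \in cones ->
          in_cone v s w -> in_cone v t w -> in_cone v (s :&: t) w) /\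
      (* complete: the cones cover N_R *)
      (forall w : 'rV[algC]_n, (forall k, w ord0 k \is Num.real) ->
          exists2 s, s \in cones & in_cone v s w).

Definition maxcone r (cones : {set {set 'I_r}}) (s : {set 'I_r}) : Prop :=
  s \in cones /\ forall t : {set 'I_r}, t \in cones -> s \subset t -> t = s.

(* x in C^r lies outside the exceptional set Z(Sigma) *)
Definition notZ r (cones : {set {set 'I_r}}) (x : 'I_r -> algC) : Prop :=
  exists2 s, s \in cones & forall j, x j = 0 -> j \in s.

(* the group G = Hom(Cl(X), C^* ) inside (C^* )^r *)
Definition inG n r (v : 'I_r -> 'rV[int]_n) (t : 'I_r -> algC) : Prop :=
  (forall j, t j != 0) /\
  forall m : 'rV[int]_n, \prod_(j < r) t j ^ (\sum_(k < n) m ord0 k * v j ord0 k) = 1.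

(* x and y represent the same point of X = (C^r \ Z(Sigma)) / G *)
Definition Gequiv n r (v : 'I_r -> 'rV[int]_n) (x y : 'I_r -> algC) : Prop :=
  exists2 t, inG v t & forall j, y j = t j * x j.

Definition mono_eval r (e : 'I_r -> nat) (x : 'I_r -> algC) : algC :=
  \prod_(j < r) x j ^+ e j.

Definition inZ1n n r (e : 'I_n.+1 -> 'I_r -> nat) (x : 'I_r -> algC) : Prop :=
  forall i : 'I_n, mono_eval (e (lift ord0 i)) x = 0.

Definition in_Osigma r (s : {set 'I_r}) (x : 'I_r -> algC) : Prop :=
  forall j, x j = 0 <-> j \in s.

Definition good_cone n r (cones : {set {set 'I_r}}) (e : 'I_n.+1 -> 'I_r -> nat)
  (s : {set 'I_r}) : Prop :=
  maxcone cones s /\ forall i : 'I_n, exists2 j, j \in s & (0 < e (lift ord0 i) j)%N.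

(* Main.v *)
Require Import Defs.
From HB Require Import structures.
From mathcomp Require Import all_boot all_order all_algebra all_field.
Import Order.TTheory GRing.Theory Num.Theory.
Local Open Scope ring_scope.

Lemma exprz_sum (I : finType) (x : algC) (f : I -> int) : x != 0 ->
  x ^ (\sum_i f i) = \prod_i x ^ (f i).
Proof.
move=> x0; apply: (big_morph (fun z : int => x ^ z)).
  by move=> a b; rewrite expfzDr.
by rewrite expr0z.
Qed.

Lemma prod_exprz (I : finType) (y : I -> algC) (z : int) :
  (forall i, y i != 0) -> (\prod_i y i) ^ z = \prod_i y i ^ z.
Proof.
move=> y0.
suff [] : (\prod_i y i != 0) /\ (\prod_i y i) ^ z = \prod_i y i ^ z by [].
elim/big_rec2: _ => [|i a b _ [a0 <-]].
  by rewrite oner_neq0 /= exp1rz.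
split; first by rewrite mulf_neq0.
by rewrite exprzMl // unitfE.
Qed.

Lemma root_int (d : int) (w : algC) : d != 0 -> w != 0 ->
  exists2 u : algC, u != 0 & u ^ d = w.
Proof.
case: d => [a|a] d0 w0.
  have a0 : (0 < a)%N by case: a d0.
  exists (a.-root w); first by rewrite rootC_eq0.
  by rewrite /=; apply: rootCK.
exists (a.+1.-root w)^-1; first by rewrite invr_eq0 rootC_eq0.
rewrite NegzE -exprz_inv invrK -exprnP; exact: rootCK.
Qed.
Lemma solve_mx m (A : 'M[int]_m) (w : 'I_m -> algC) : \det A != 0 ->
  (forall k, w k != 0) ->
  exists T : 'I_m -> algC, (forall i, T i != 0) /\
    forall k, \prod_i T i ^ A i k = w k.
Proof.
move=> d0 w0.
have [u Hu] : exists u : 'I_m -> algC, forall l, u l != 0 /\ u l ^ (\det A) = w l.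
  apply: (@fin_all_exists _ (fun _ => algC) (fun l ul => ul != 0 /\ ul ^ (\det A) = w l)) => l.
  by have [u u0 uE] := root_int _ _ d0 (w0 l); exists u.
have u0 : forall l, u l != 0 by move=> l; case: (Hu l).
have u0' : forall i l, u l ^ (\adj A) l i != 0 by move=> i l; rewrite expfz_neq0.
exists (fun i => \prod_l u l ^ (\adj A) l i); split.
  move=> i; rewrite prodf_seq_neq0; apply/allP => l _ /=.
  exact: u0'.
move=> k.
rewrite (eq_bigr (fun i => \prod_l u l ^ ((\adj A) l i * A i k))); last first.
  by move=> i _; rewrite prod_exprz //; apply: eq_bigr => l _; rewrite exprz_exp.
rewrite exchange_big /=.
rewrite (eq_bigr (fun l => u l ^ (((\det A)%:M : 'M[int]_m) l k))); last first.
  by move=> l _; rewrite -exprz_sum // -mul_adj_mx mxE.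
rewrite (bigD1 k) //= mxE eqxx mulr1n big1 ?mulr1; first by case: (Hu k).
by move=> l /negbTE lk; rewrite mxE lk mulr0n expr0z.
Qed.

Lemma solve_mx' m n (H : m = n) (A : 'M[int]_(m, n)) (w : 'I_n -> algC) :
  row_free (map_mx (fun z : int => z%:~R) A : 'M[algC]_(m, n)) ->
  (forall k, w k != 0) ->
  exists T : 'I_m -> algC, (forall i, T i != 0) /\
    forall k, \prod_i T i ^ A i k = w k.
Proof.
subst n => rf w0; apply: solve_mx => //.
move: rf; rewrite row_free_unit unitmxE det_map_mx unitfE intr_eq0 //.
Qed.

Section Fan.
Variables (n r : nat) (v : 'I_r -> 'rV[int]_n).

Definition Mi (s : {set 'I_r}) : 'M[int]_(#|s|, n) :=
  \matrix_(i, k) v (enum_val i) ord0 k.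

Lemma indep_rowfree (s : {set 'I_r}) :
  (forall a : 'I_r -> algC, \sum_(j in s) a j *: vC v j = 0 ->
     forall j, j \in s -> a j = 0) ->
  row_free (map_mx (fun z : int => z%:~R) (Mi s) : 'M[algC]_(#|s|, n)).
Proof.
move=> ind; apply: inj_row_free => u Hu.
pose a j := \sum_(i | enum_val i == j) u ord0 i.
have aE : forall i, a (enum_val i) = u ord0 i.
  move=> i; rewrite /a (big_pred1 i) // => i' /=.
  by apply/eqP/eqP => [/enum_val_inj|->].
have : \sum_(j in s) a j *: vC v j = 0.
  rewrite big_enum_val /=; apply/rowP => k.
  have := congr1 (fun M : 'rV_n => M ord0 k) Hu; rewrite !mxE => <-.
  rewrite summxE; apply: eq_bigr => i _; rewrite aE !mxE.
  done.
move=> /ind H; apply/rowP => i; rewrite mxE -aE; apply: H.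
exact: enum_valP.
Qed.

Lemma card_le (s : {set 'I_r}) :
  (forall a : 'I_r -> algC, \sum_(j in s) a j *: vC v j = 0 ->
     forall j, j \in s -> a j = 0) -> (#|s| <= n)%N.
Proof.
move=> /indep_rowfree rf; move: (rank_leq_col (map_mx (fun z : int => z%:~R) (Mi s) : 'M[algC]_(#|s|, n))).
by rewrite (eqP rf).
Qed.

End Fan.

Lemma key n r (v : 'I_r -> 'rV[int]_n) (s : {set 'I_r}) (x : 'I_r -> algC) :
  (forall a : 'I_r -> algC, \sum_(j in s) a j *: vC v j = 0 ->
     forall j, j \in s -> a j = 0) ->
  #|s| = n -> (forall j, x j = 0 <-> j \in s) ->
  Gequiv v (fun j => if j \in s then 0 else 1) x.
Proof.
move=> ind cs xs.
have rf := @indep_rowfree n r v s ind.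
have xn0 : forall j, j \notin s -> x j != 0.
  by move=> j js; apply/eqP => /xs; rewrite (negbTE js).
pose w k := (\prod_(j | j \notin s) x j ^ v j ord0 k)^-1.
have Pn0 : forall k, \prod_(j | j \notin s) x j ^ v j ord0 k != 0.
  move=> k; rewrite prodf_seq_neq0; apply/allP => j _; apply/implyP => js.
  by rewrite expfz_neq0 // xn0.
have w0 : forall k, w k != 0 by move=> k; rewrite invr_eq0.
have [T [T0 TE]] := @solve_mx' _ _ cs _ w rf w0.
pose t j := if j \in s then \prod_(i | enum_val i == j) T i else x j.
have tE : forall i, t (enum_val i) = T i.
  move=> i; rewrite /t enum_valP (big_pred1 i) // => i' /=.
  by apply/eqP/eqP => [/enum_val_inj|->].
have t0 : forall j, t j != 0.
  move=> j; case js: (j \in s).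
    by rewrite -(enum_rankK_in js js) tE.
  by rewrite /t js xn0 ?js.
exists t; last first.
  move=> j; case js: (j \in s); last by rewrite mulr1 /t js.
  by rewrite mulr0; apply/xs.
split=> // m.
have inner : forall k, \prod_j t j ^ v j ord0 k = 1.
  move=> k; rewrite (bigID (fun j => j \in s)) /=.
  rewrite big_enum_val /=.
  rewrite (eq_bigr (fun i => T i ^ Mi n r v s i k)); last first.
    by move=> i _; rewrite tE mxE.
  rewrite [X in _ * X](eq_bigr (fun j => x j ^ v j ord0 k)); last first.
    by move=> j /negbTE js; rewrite /t js.
  by rewrite TE /w mulVf.
rewrite (eq_bigr (fun j => \prod_k (t j ^ v j ord0 k) ^ m ord0 k)); last first.
  move=> j _; rewrite exprz_sum //; apply: eq_bigr => k _.
  by rewrite exprz_exp mulrC.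
rewrite exchange_big /=.
rewrite (eq_bigr (fun k => (\prod_j t j ^ v j ord0 k) ^ m ord0 k)); last first.
  by move=> k _; rewrite prod_exprz // => j; rewrite expfz_neq0.
by apply: big1 => k _; rewrite inner exp1rz.
Qed.

Lemma uniq_e m (f : 'I_m -> nat) a b :
  (\sum_(i < m) f i)%N = 1%N -> (0 < f a)%N -> (0 < f b)%N -> a = b.
Proof.
move=> S fa fb; apply/eqP; apply/negPn/negP => ab.
move: S; rewrite (bigD1 a) //= (bigD1 b) /=; last by rewrite eq_sym.
move: fa fb; case: (f a) => // p; case: (f b) => // q _ _.
by rewrite addSn addnS => -[].
Qed.

Lemma part1 (n r : nat) (v : 'I_r -> 'rV[int]_n)
  (cones : {set {set 'I_r}}) (e : 'I_n.+1 -> 'I_r -> nat) :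
  simplicial_complete_fan v cones ->
  (forall j : 'I_r, (\sum_(i < n.+1) e i j)%N = 1%N) ->
  forall x, notZ cones x -> inZ1n e x ->
  exists s, [/\ s \in cones, #|s| = n, (forall j, x j = 0 <-> j \in s),
     maxcone cones s & forall i : 'I_n, exists2 j, j \in s & (0 < e (lift ord0 i) j)%N].
Proof.
move=> [_ [_ [_ [_ [ind _]]]]] sumE x [s0 s0c s0H] xZ.
have [g Hg] : exists g : 'I_n -> 'I_r, forall i, x (g i) = 0 /\ (0 < e (lift ord0 i) (g i))%N.
  apply: (@fin_all_exists _ (fun _ => 'I_r) (fun i j => x j = 0 /\ (0 < e (lift ord0 i) j)%N)) => i.
  have /eqP/prodf_eq0 [j _] := xZ i.
  by rewrite expf_eq0 => /andP [ej /eqP xj]; exists j.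
have ginj : injective g.
  move=> i1 i2 E; apply: (@lift_inj n.+1 ord0); apply: (@uniq_e _ (fun i => e i (g i1)) _ _ (sumE (g i1))).
    by case: (Hg i1).
  by rewrite E; case: (Hg i2).
pose Z := [set j | x j == 0].
have ZS : Z \subset s0 by apply/subsetP => j; rewrite inE => /eqP /s0H.
have nZ : (n <= #|Z|)%N.
  rewrite -[n]card_ord -(card_imset _ ginj); apply: subset_leq_card.
  by apply/subsetP => j /imsetP [i _ ->]; rewrite inE; case: (Hg i) => ->.
have cs0 := @card_le n r v s0 (ind s0 s0c).
have Zs : Z = s0 by apply/eqP; rewrite eqEcard ZS (leq_trans cs0 nZ).
exists s0; split => //.
- by apply/anti_leq; rewrite cs0 -Zs.
- by move=> j; rewrite -Zs inE; split => [->|/eqP].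
- split=> // t tc st; apply/eqP; rewrite eq_sym eqEcard st /=.
  by rewrite -Zs (leq_trans (@card_le n r v t (ind t tc)) nZ).
- move=> i; exists (g i); last by case: (Hg i).
  by rewrite -Zs inE; case: (Hg i) => ->.
Qed.

Theorem mainTheorem10 (n r : nat) (v : 'I_r -> 'rV[int]_n)
  (cones : {set {set 'I_r}}) (e : 'I_n.+1 -> 'I_r -> nat) :
  simplicial_complete_fan v cones ->
  (* z_0 ... z_n = x_1 ... x_r *)
  (forall j : 'I_r, (\sum_(i < n.+1) e i j)%N = 1%N) ->
  (* Z_1 /\ ... /\ Z_n is the union of the O_sigma, sigma good *)
  (forall x : 'I_r -> algC, notZ cones x ->
     (inZ1n e x <-> exists2 s : {set 'I_r}, good_cone cones e s & in_Osigma s x)) /\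
  (* Z_1 /\ ... /\ Z_n is a finite set of points of X *)
  (exists (k : nat) (p : 'I_k -> 'I_r -> algC),
     (forall l, notZ cones (p l) /\ inZ1n e (p l)) /\
     (forall x, notZ cones x -> inZ1n e x -> exists l, Gequiv v (p l) x)).
Proof.
move=> fan sumE.
have zeroZ : forall (s : {set 'I_r}) (x : 'I_r -> algC),
    (forall i : 'I_n, exists2 j, j \in s & (0 < e (lift ord0 i) j)%N) ->
    (forall j, j \in s -> x j = 0) -> inZ1n e x.
  move=> s x sg sx i; have [j js ej] := sg i; apply/eqP/prodf_eq0.
  by exists j => //; rewrite expf_eq0 ej (sx j js) eqxx.
split.
  move=> x xnZ; split.
    move=> xZ; have [s [sc cs xs smax sg]] := @part1 n r v cones e fan sumE x xnZ xZ.
    by exists s.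
  by move=> [s [_ sg] sO]; apply: (zeroZ s) => // j /sO.
pose S := [set s in cones | (#|s| == n) &&
            [forall i : 'I_n, [exists j in s, (0 < e (lift ord0 i) j)%N]]].
exists (#|S|); exists (fun (l : 'I_#|S|) j => if j \in (enum_val l : {set 'I_r}) then 0 else 1).
split.
  move=> l; have := enum_valP l; rewrite inE => /andP [sc /andP [_ /forallP sg]].
  split.
    by exists (enum_val l) => // j; case: ifP => // _ /eqP; rewrite oner_eq0.
  apply: (zeroZ (enum_val l)); last by move=> j ->.
  by move=> i; have /exists_inP [j js ej] := sg i; exists j.
move=> x xnZ xZ.
have [s [sc cs xs smax sg]] := @part1 n r v cones e fan sumE x xnZ xZ.
have sS : s \in S.
  rewrite inE sc cs eqxx /=; apply/forallP => i.
  by have [j js ej] := sg i; apply/exists_inP; exists j.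
exists (enum_rank_in sS s); rewrite enum_rankK_in //.
case: fan => [_ [_ [_ [_ [ind _]]]]].
exact: (@key n r v s x (ind s sc) cs xs).
Qed.
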